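(* Let $N$ be a finitely generated, semipositive binoid, $T$ an $N$-set generated by $r$ elements, and $\mathfrak n$ an $N_+$-primary ideal of $N$. Let $n_1,\dots,n_s\in N_+$ be such that every element of $N$ is either a unit or of the form $u+a_1n_1+\cdots+a_sn_s$ with $u\in N^\times$, $a_j\in\mathbb N$. Then there is a constant $D$, independent of $q$, such that for every $q\in\mathbb N_+$ the pointed set $T/([q]\mathfrak n+T)$ is finite and $$\#\,T/([q]\mathfrak n+T)\le r|N^\times|+Dq^s.$$
   Context: A binoid $(N,+,0,\infty)$ is a commutative monoid $(N,+,0)$ with an element $\infty$ satisfying $a+\infty=\infty$ for all $a\in N$. Write $N^\times$ for the group of units of $N$ and $N_+=N\setminus N^\times$. $N$ is finitely generated if it is finitely generated as a monoid; semipositive if $N\neq\{\infty\}$ and $N^\times$ is finite. An ideal of $N$ is a nonempty subset $I\subseteq N$ with $I+N\subseteq I$ (so $\infty\in I$). For an ideal $I$ and $q\in\mathbb N_+$, $[q]I$ denotes the ideal generated by $\{qa: a\in I\}$. An ideal $\mathfrak n$ is $N_+$-primary if $\mathfrak n\subseteq N_+$ and for every $a\in N_+$ there is $k\ge1$ with $ka\in\mathfrak n$. An $N$-set is a pointed set $(S,p)$ with a map $N\times S\to S$, $(n,s)\mapsto n+s$, such that $(n+m)+s=n+(m+s)$, $0+s=s$, $\infty+s=p$ and $n+p=p$. It is generated by $s_1,\dots,s_r\in S$ if $S=\bigcup_j (N+s_j)$. For an ideal $J$ and an $N$-set $T$, $J+T=\{a+t:a\in J,t\in T\}$ is an $N$-subset;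 for an $N$-subset $S\subseteq T$, the quotient $T/S$ is the $N$-set $(T\setminus S)\cup\{p\}$. For a finite pointed set $S$ we write $\#S=|S|-1$. *)

(* Defs.v *)
From Stdlib Require Import List Arith.
Import ListNotations.

Record binoid := Binoid {
  bcar :> Type;
  badd : bcar -> bcar -> bcar;
  bzero : bcar;
  binf : bcar;
  badd_assoc : forall a b c, badd a (badd b c) = badd (badd a b) c;
  badd_comm : forall a b, badd a b = badd b a;
  badd_0l : forall a, badd bzero a = a;
  badd_infl : forall a, badd binf a = binf
}.

Arguments badd {_} _ _.
Arguments bzero {_}.
Arguments binf {_}.

Section BinoidDefs.
Variable N : binoid.

Fixpoint nsmul (q : nat) (a : N) : N :=
  match q with O => bzero | S k => badd a (nsmul k a) end.

Definition is_unit (a : N) : Prop := exists b : N, badd a b = bzero.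
Definition in_Nplus (a : N) : Prop := ~ is_unit a.

Inductive gen_by (g : list N) : N -> Prop :=
| gen_zero : gen_by g bzero
| gen_step x y : In x g -> gen_by g y -> gen_by g (badd x y).

Definition fin_gen : Prop := exists g : list N, forall x : N, gen_by g x.

Definition semipositive : Prop :=
  (exists a : N, a <> binf) /\
  (exists U : list N, forall u, is_unit u -> In u U).

Definition is_ideal (I : N -> Prop) : Prop :=
  (exists a, I a) /\ (forall a b, I a -> I (badd a b)).

Definition qideal (q : nat) (I : N -> Prop) : N -> Prop :=
  fun x => exists a b, I a /\ x = badd (nsmul q a) b.

Definition Nplus_primary (I : N -> Prop) : Prop :=
  is_ideal I /\ (forall a, I a -> in_Nplus a) /\
  (forall a, in_Nplus a -> exists k, 1 <= k /\ I (nsmul k a)).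

Fixpoint lincomb (a : list nat) (ns : list N) : N :=
  match a, ns with
  | k :: a', n :: ns' => badd (nsmul k n) (lincomb a' ns')
  | _, _ => bzero
  end.
End BinoidDefs.

Arguments nsmul {N}.
Arguments is_unit {N}.
Arguments in_Nplus {N}.
Arguments qideal {N}.
Arguments lincomb {N}.

Record Nset (N : binoid) := NSet {
  scar :> Type;
  spt : scar;
  sact : N -> scar -> scar;
  sact_add : forall n m s, sact (badd n m) s = sact n (sact m s);
  sact_0 : forall s, sact bzero s = s;
  sact_inf : forall s, sact binf s = spt;
  sact_pt : forall n, sact n spt = spt
}.

Arguments spt {N}.
Arguments sact {N}.

Definition Nset_gen_by {N : binoid} (T : Nset N) (g : list T) : Prop :=
  forall t : T, exists n : N, exists s, In s g /\ t = sact T n s.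

Definition ideal_plus {N : binoid} (J : N -> Prop) (T : Nset N) : T -> Prop :=
  fun t => exists a s, J a /\ t = sact T a s.

(* underlying set of the quotient T/S : (T \ S) u {p} *)
Definition quot_mem {N : binoid} (T : Nset N) (S : T -> Prop) : T -> Prop :=
  fun t => ~ S t \/ t = spt T.

(* the pointed set T/S is finite with #(T/S) = |T/S| - 1 = c *)
Definition quot_finite_card {N : binoid} (T : Nset N) (S : T -> Prop) (c : nat)
  : Prop :=
  exists l : list T, NoDup l /\ (forall t, In t l <-> quot_mem T S t) /\
                     c = length l - 1.

(* Main.v *)
Require Import Defs.
From Stdlib Require Import List Arith Lia Classical.
Import ListNotations.

Lemma nsmul_add (N : binoid) p m (x : N) :
  nsmul (p + m) x = badd (nsmul p x) (nsmul m x).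
Proof.
  induction p; simpl. now rewrite badd_0l.
  now rewrite IHp, badd_assoc.
Qed.

Lemma nsmul_mul (N : binoid) q k (x : N) :
  nsmul (q * k) x = nsmul q (nsmul k x).
Proof.
  induction q; simpl; auto.
  now rewrite nsmul_add, IHq.
Qed.

Lemma qideal_addr (N : binoid) q (nn : N -> Prop) x y :
  qideal q nn x -> qideal q nn (badd x y).
Proof.
  intros [a [b [Ha Hx]]]. exists a, (badd b y). split; auto.
  subst x. now rewrite badd_assoc.
Qed.

Lemma qideal_addl (N : binoid) q (nn : N -> Prop) x y :
  qideal q nn x -> qideal q nn (badd y x).
Proof. intros H. rewrite badd_comm. now apply qideal_addr. Qed.

Lemma lincomb_big (N : binoid) (nn : N -> Prop) K q :
  forall (a : list nat) (ns : list N), length a = length ns ->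
  (forall n, In n ns -> exists k, k <= K /\ nn (nsmul k n)) ->
  Forall (fun x => x < q * K) a \/ qideal q nn (lincomb a ns).
Proof.
  induction a as [|k a IH]; intros ns Hl Hk.
  - left; constructor.
  - destruct ns as [|n ns]; simpl in Hl; [discriminate|].
    simpl.
    destruct (lt_dec k (q * K)) as [Hlt|Hge].
    + destruct (IH ns ltac:(lia) (fun m Hm => Hk m (or_intror Hm))) as [Hf|Hq].
      * left; constructor; auto.
      * right; now apply qideal_addl.
    + right. apply qideal_addr.
      destruct (Hk n (or_introl eq_refl)) as [kn [Hkn Hnn]].
      exists (nsmul kn n), (nsmul (k - q * kn) n). split; auto.
      rewrite <- nsmul_mul, <- nsmul_add. f_equal.
      assert (q * kn <= q * K) by (apply Nat.mul_le_mono_l; auto). lia.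
Qed.

Fixpoint box (m s : nat) : list (list nat) :=
  match s with
  | 0 => [[]]
  | S s' => flat_map (fun i => map (cons i) (box m s')) (seq 0 m)
  end.

Lemma flat_map_const_len {A B} (f : A -> list B) c l :
  (forall x, In x l -> length (f x) = c) -> length (flat_map f l) = length l * c.
Proof.
  induction l; simpl; intros H; auto.
  rewrite length_app, H, IHl; auto.
Qed.

Lemma box_len m s : length (box m s) = m ^ s.
Proof.
  induction s; simpl; auto.
  rewrite (flat_map_const_len _ (m ^ s)), length_seq; auto.
  intros; now rewrite length_map.
Qed.

Lemma box_in m : forall a s, length a = s -> Forall (fun x => x < m) a -> In a (box m s).
Proof.
  induction a; intros s Hl Hf; subst s; simpl; auto.
  inversion Hf; subst.
  apply in_flat_map. exists a. split. apply in_seq; lia.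
  apply in_map. apply IHa; auto.
Qed.

Lemma fin_sub {A} (L : list A) : forall (P : A -> Prop),
  (forall x, P x -> In x L) ->
  exists l, NoDup l /\ (forall x, In x l <-> P x) /\ length l <= length L.
Proof.
  induction L as [|a L IH]; intros P HP.
  - exists []. split; [constructor|]. split; [|simpl; lia]. intros x; split; [intros []|intros Hx; destruct (HP x Hx)].
  - destruct (IH (fun x => P x /\ x <> a)) as [l [Hnd [Hin Hlen]]].
    { intros x [Hx Hne]. destruct (HP x Hx); auto. congruence. }
    destruct (classic (P a)) as [Ha|Ha].
    + exists (a :: l). repeat split; simpl; try lia.
      * constructor; auto. intros Hal. apply Hin in Hal. tauto.
      * intros [<-|Hx]; auto. apply Hin in Hx; tauto.
      * intros Hx. destruct (classic (a = x)); auto. right; apply Hin; auto.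
    + exists l. repeat split; simpl; try lia; auto.
      * intros Hx; apply Hin in Hx; tauto.
      * intros Hx; apply Hin; split; auto. intro; subst; tauto.
Qed.

Lemma getK (N : binoid) (nn : N -> Prop) : forall l : list N,
  (forall n, In n l -> exists k, nn (nsmul k n)) ->
  exists K, forall n, In n l -> exists k, k <= K /\ nn (nsmul k n).
Proof.
  induction l as [|a l IH]; intros H.
  - exists 0; intros n [].
  - destruct (IH (fun n Hn => H n (or_intror Hn))) as [K HK].
    destruct (H a (or_introl eq_refl)) as [ka Hka].
    exists (max K ka). intros n [<-|Hn].
    + exists ka; split; auto; lia.
    + destruct (HK n Hn) as [k [Hk1 Hk2]]. exists k; split; auto; lia.
Qed.

Theorem mainTheorem13 (N : binoid) (T : Nset N) (r : nat) (sg : list T)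
  (nn : N -> Prop) (ns : list N) (U : list N)
  (Hfg : fin_gen N) (Hsp : semipositive N)
  (HU : NoDup U /\ forall u, is_unit u <-> In u U)
  (Hr : length sg = r) (Hgen : Nset_gen_by T sg)
  (Hnn : Nplus_primary N nn)
  (Hns : forall n, In n ns -> in_Nplus n)
  (Hdec : forall x : N, is_unit x \/
     exists u a, is_unit u /\ length a = length ns /\ x = badd u (lincomb a ns)) :
  exists D : nat, forall q : nat, 1 <= q ->
    exists c, quot_finite_card T (ideal_plus (qideal q nn) T) c /\
      c <= r * length U + D * q ^ length ns.
Proof.
  destruct Hnn as [_ [_ Hprim]].
  destruct (getK N nn ns) as [K HK].
  { intros n Hn. destruct (Hprim n (Hns n Hn)) as [k [_ Hk]]. eauto. }
  exists (r * length U * K ^ length ns).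
  intros q _.
  set (L := flat_map (fun s => flat_map (fun u => sact T u s ::
              map (fun a => sact T (badd u (lincomb a ns)) s) (box (q * K) (length ns))) U) sg).
  destruct (fin_sub (spt T :: L) (quot_mem T (ideal_plus (qideal q nn) T)))
    as [l [Hnd [Hin Hlen]]].
  { intros t [Hnot|Hpt]; [right | left; auto].
    destruct (Hgen t) as [n [s [Hs Ht]]].
    unfold L. apply in_flat_map. exists s. split; auto.
    apply in_flat_map.
    destruct (Hdec n) as [Hu | [u [a [Hu [Hla Hn]]]]].
    - exists n. split. apply HU; auto. left; auto.
    - exists u. split. apply HU; auto. right.
      destruct (lincomb_big N nn K q a ns Hla HK) as [Hf|Hq].
      + apply in_map_iff. exists a. split. subst; auto. apply box_in; auto.
      + exfalso. apply Hnot. exists n, s. split; auto. subst n. now apply qideal_addl. }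
  exists (length l - 1). split.
  - exists l. repeat split; auto; apply Hin.
  - simpl in Hlen.
    assert (HL : length L = r * length U * (1 + (q * K) ^ length ns)).
    { unfold L. rewrite (flat_map_const_len _ (length U * (1 + (q * K) ^ length ns))).
      - rewrite Hr; lia.
      - intros s _. rewrite (flat_map_const_len _ (1 + (q * K) ^ length ns)); auto.
        intros u _. simpl. now rewrite length_map, box_len. }
    rewrite Nat.pow_mul_l in HL.
    assert (Heq : r * length U * (1 + q ^ length ns * K ^ length ns) =
      r * length U + r * length U * K ^ length ns * q ^ length ns) by ring.
    lia.
Qed.
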